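(* For every nonempty $J\subseteq\{1,\ldots,n\}$, the Laurent polynomial $q_J=t^{-\omega_J}\Delta_J(\tilde tZ)$ lies in $\mathbb{C}[z,t]$; its specialization at $t=0$ is $\pm$ the antidiagonal term of $p_J=\Delta_J(Z)$, its specialization at $t=1$ is $p_J$, and $q_J$ is invariant under the action of the subgroup $U\subseteq B$ of lower triangular unipotent matrices on $M_n\times\mathbb{C}$, i.e. $q_J(\Psi_\tau(u)\cdot Z,\tau)=q_J(Z,\tau)$ for all $u\in U$, $Z\in M_n$, $\tau\in\mathbb{C}$.
   Context: $M_n$ is the space of complex $n\times n$ matrices with coordinate ring $\mathbb{C}[z]=\mathbb{C}[z_{ij}:1\le i,j\le n]$; $Z=(z_{ij})$ is the generic matrix. $\omega_{ij}=3^{\,n-i-j}$ if $i+j\le n$ and $\omega_{ij}=0$ otherwise. $\tilde tZ$ denotes the matrix with entries $t^{\omega_{ij}}z_{ij}$. For $J=\{j_1<\cdots<j_k\}$, $\Delta_J(Z)$ is the minor with rows $1,\ldots,k$ and columns $J$, and $\omega_J=\sum_{r=1}^k\omega_{r,j_{k+1-r}}$ is the sum of the weights along the antidiagonal of the square submatrix of $\omega$ with rows $1,\ldots,k$ and columns $J$. $B$ is the group of invertible lower triangular matrices, acting on $M_n\times\mathbb{C}$ by $b\cdot(Z,\tau)=(\Psi_\tau(b)\cdot Z,\tau)$, where $\Psi_\tau(b)=(\tilde\tau_1^{-1}b\tilde\tau_1,\ldots,\tilde\tau_n^{-1}b\tilde\tau_n)$ with $\tilde\tau_j=\mathrm{diag}(\tau^{\omega_{1j}},\ldots,\tau^{\omega_{nj}})$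 for $\tau\ne0$, and for $\tau=0$, $\Psi_0(b)=(b_1,\ldots,b_n)$ with $b_j$ equal to $b$ with all entries in columns $1,\ldots,n-j$ strictly below the diagonal set to $0$; an $n$-tuple $(g_1,\ldots,g_n)$ of matrices acts on $Z$ columnwise, sending the $j$-th column $Z_j$ to $g_jZ_j$. *)

(* Defs.v *)
From HB Require Import structures.
From mathcomp Require Import all_boot all_order all_algebra.
From mathcomp Require Import mpoly.
From mathcomp Require Import complex.
From Stdlib Require Import Rdefinitions.
From mathcomp Require Import Rstruct.
Set Implicit Arguments. Unset Strict Implicit. Unset Printing Implicit Defensive.
Import Order.TTheory GRing.Theory Num.Theory.
Local Open Scope ring_scope.

Notation CC := (complex Rdefinitions.R).

(* Indices are 0-based: i : 'I_n stands for the paper's row i+1.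
   omega i j = 3^(n - (i+1) - (j+1)) if (i+1)+(j+1) <= n, and 0 otherwise. *)
Definition omega (n : nat) (i j : 'I_n) : nat :=
  if leq (addn (addn i j) 2) n then expn 3 (subn (subn (subn n 2) i) j) else 0%N.

Lemma card_set_ord_le (n : nat) (J : {set 'I_n}) : leq #|J| n.
Proof. by have := max_card (mem J); rewrite card_ord. Qed.

Definition rowJ (n : nat) (J : {set 'I_n}) (r : 'I_#|J|) : 'I_n :=
  widen_ord (card_set_ord_le J) r.
(* columns j_1 < ... < j_k : the elements of J in increasing order *)
Definition colJ (n : nat) (J : {set 'I_n}) (r : 'I_#|J|) : 'I_n := enum_val r.
Arguments rowJ {n} J r.
Arguments colJ {n} J r.

Definition DeltaJ (R : comNzRingType) (n : nat) (J : {set 'I_n}) (M : 'M[R]_n) : R :=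
  \det (\matrix_(r, s) M (rowJ J r) (colJ J s)).

Definition omegaJ (n : nat) (J : {set 'I_n}) : nat :=
  (\sum_(r < #|J|) omega (rowJ J r) (colJ J (rev_ord r)))%N.

(* Coordinate ring C[z] = C[z_ij] : variable z_ij is 'X_(mxvec_index i j). *)
Definition zring (n : nat) := {mpoly CC[n * n]}.

Definition genZ (n : nat) : 'M[zring n]_n :=
  \matrix_(i, j) 'X_(mxvec_index i j).

Definition tildeZ (n : nat) : 'M[{poly zring n}]_n :=
  \matrix_(i, j) ('X^(omega i j) * (genZ n i j)%:P).

Definition evalZt (n : nat) (q : {poly zring n}) (Z : 'M[CC]_n) (tau : CC) : CC :=
  (map_poly (fun p : zring n => p.@[fun k => mxvec Z 0 k]) q).[tau].

Definition tauj (n : nat) (tau : CC) (j : 'I_n) : 'M[CC]_n :=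
  diag_mx (\row_a (tau ^+ omega a j)).

(* Psi_tau(b) : an n-tuple (indexed by the column j) of matrices *)
Definition Psi (n : nat) (tau : CC) (b : 'M[CC]_n) : 'I_n -> 'M[CC]_n :=
  fun j =>
    if tau != 0 then invmx (tauj tau j) *m b *m tauj tau j
    else
      \matrix_(a, c) (if (leq (addn (addn c j) 2) n && leq c.+1 a) then 0 else b a c).

Definition colact (n : nat) (g : 'I_n -> 'M[CC]_n) (Z : 'M[CC]_n) : 'M[CC]_n :=
  \matrix_(a, j) (g j *m col j Z) a 0.

Definition lower_unipotent (n : nat) (u : 'M[CC]_n) : Prop :=
  (forall a c : 'I_n, leq a.+1 c -> u a c = 0) /\ (forall a : 'I_n, u a a = 1).

(* Main.v *)
Require Import Defs.
From HB Require Import structures.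
From mathcomp Require Import all_boot all_order all_algebra.
From mathcomp Require Import mpoly.
From mathcomp Require Import complex.
From mathcomp Require Import Rstruct.
From mathcomp Require Import all_fingroup.
From mathcomp Require Import zify ring.
Import GRing.Theory.
Local Open Scope ring_scope.

Section Comb.
Variables (n : nat) (J : {set 'I_n}).
Local Notation k := #|J|.

Lemma sorted_colJ : sorted ltn (map val (enum J)).
Proof.
apply: (subseq_sorted ltn_trans (s2 := map val (enum 'I_n))).
  apply: map_subseq. rewrite {1}/enum_mem enumT. apply: filter_subseq.
by rewrite val_enum_ord iota_ltn_sorted.
Qed.

Local Notation L := (map val (enum J)).

Lemma size_L : size L = k.
Proof. by rewrite size_map -cardE. Qed.

Lemma colJE (s : 'I_k) : nat_of_ord (colJ J s) = nth 0%N L s.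
Proof.
rewrite /colJ (enum_val_nth (enum_val s)) (nth_map (enum_val s)) //.
by rewrite -cardE.
Qed.

Lemma L_mono (a b : nat) : (a < b)%N -> (b < k)%N -> (nth 0%N L a < nth 0%N L b)%N.
Proof.
move=> ab bk.
apply: (sorted_ltn_nth ltn_trans 0%N sorted_colJ); rewrite ?inE /=; rewrite -?size_L in bk *; try done.
exact: ltn_trans ab bk.
Qed.

Lemma colJ_mono (a b : 'I_k) : (a < b)%N -> (nat_of_ord (colJ J a) < nat_of_ord (colJ J b))%N.
Proof. by move=> ab; rewrite !colJE; apply: L_mono. Qed.

Lemma colJ_le (a b : 'I_k) : (a <= b)%N -> (nat_of_ord (colJ J a) <= nat_of_ord (colJ J b))%N.
Proof.
rewrite leq_eqVlt => /orP[/eqP ab|ab]; last by apply: ltnW; apply: colJ_mono.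
by have -> : a = b by apply: ord_inj.
Qed.

Lemma L_gap d a : (a + d < k)%N -> (nth 0%N L a + d <= nth 0%N L (a + d))%N.
Proof.
elim: d => [|d IH] h; first by rewrite !addn0.
have h1 : (a + d < k)%N by lia.
have := IH h1; have := @L_mono (a + d) (a + d.+1) ltac:(lia) h.
lia.
Qed.

Lemma colJ_bound (s : 'I_k) : (nat_of_ord (colJ J s) + (k - s) <= n)%N.
Proof.
have sk := ltn_ord s.
have km : (k.-1 < k)%N by lia.
have := @L_gap (k.-1 - s) s ltac:(lia).
have -> : (s + (k.-1 - s) = k.-1)%N by lia.
have := ltn_ord (colJ J (Ordinal km)); rewrite colJE.
rewrite colJE => h1 h2. simpl in h1. set x := nth _ _ s in h2 *. set y := nth _ _ #|J|.-1 in h1 h2. set kk := #|J| in h1 h2 sk km *. lia.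
Qed.

End Comb.

Section Comb2.
Variables (n k : nat) (c : 'I_k -> nat).
Hypothesis cmono : forall a b : 'I_k, (a < b)%N -> (c a < c b)%N.
Hypothesis cbound : forall s : 'I_k, (c s + (k - s) <= n)%N.

Lemma c_le (a b : 'I_k) : (a <= b)%N -> (c a <= c b)%N.
Proof.
rewrite leq_eqVlt => /orP[/eqP ab|ab]; last by apply: ltnW; apply: cmono.
by have -> : a = b by apply: ord_inj.
Qed.

Definition W (r s : 'I_k) : nat :=
  if (r + c s + 2 <= n)%N then (3 ^ (n - 2 - r - c s))%N else 0%N.

Lemma W_dom (r s r' s' : 'I_k) : (s + r + 1 < k)%N -> (r <= r')%N -> (s <= s')%N ->
  (r != r') || (s != s') -> (3 * W r' s' <= W r s)%N /\ (0 < W r s)%N.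
Proof.
move=> h rr ss neq.
have b := cbound s.
have le := @c_le s s' ss.
have lt : (r + c s < r' + c s')%N.
  case/orP: neq => [ne|ne].
    have : (r < r')%N by rewrite ltn_neqAle ne rr. lia.
  have : (s < s')%N by rewrite ltn_neqAle ne ss.
  move/(@cmono s s'). lia.
rewrite /W.
have -> : (r + c s + 2 <= n)%N by lia.
split; last by rewrite expn_gt0.
case: ifP => // h2.
rewrite -expnS leq_exp2l //. lia.
Qed.

Definition revp : 'S_k := perm (@rev_ord_inj k).
Lemma revpE x : revp x = rev_ord x. Proof. by rewrite permE. Qed.

Definition wt (s : 'S_k) : nat := (\sum_(r < k) W r (s r))%N.
Lemma comb_aux d (s : 'S_k) : (forall x : 'I_k, (x < k - d)%N -> s x = rev_ord x) ->
  (wt revp <= wt s)%N /\ (s != revp -> (wt revp < wt s)%N).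
Proof.
elim: d s => [|d IH] s hs.
  have -> : s = revp by apply/permP => x; rewrite revpE hs // subn0.
  by rewrite eqxx.
have [kd|kd] := leqP k d.
  by apply: IH => x; rewrite (_ : k - d = 0)%N //; lia.
pose p := (k - d.+1)%N.
have pdef : p = (k - d.+1)%N by [].
clearbody p.
have pk : (p < k)%N by lia.
pose P := Ordinal pk.
have PE : nat_of_ord P = p by [].
clearbody P.
have [eP|nP] := eqVneq (s P) (rev_ord P).
  apply: IH => x xlt.
  have [xp|xp] := ltnP x p; first by apply: hs; lia.
  have -> : x = P.
    apply: ord_inj; lia.
  exact: eP.
pose sP := s P.
have sPdef : sP = s P by [].
clearbody sP.
have sPle : (sP < k - P.+1)%N.
  have le : (sP <= k - P.+1)%N.
    rewrite leqNgt; apply/negP => lt.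
    have xlt : (rev_ord sP < P)%N .
    rewrite /=. have h7 := ltn_ord sP. have h8 := ltn_ord P. lia.
    have := hs (rev_ord sP) ltac:(rewrite /=; have := ltn_ord sP; lia); rewrite rev_ordK {2}sPdef => /perm_inj ex.
    by move: xlt; rewrite ex ltnn.
  rewrite ltn_neqAle le andbT; apply: contra nP => /eqP e.
  rewrite -sPdef; apply/eqP/ord_inj; by rewrite e.
pose r' := (s^-1)%g (rev_ord P).
have sr' : s r' = rev_ord P by rewrite permKV.
have Pr' : (P < r')%N.
  rewrite ltn_neqAle; apply/andP; split.
    apply/negP => /eqP e; have e' : P = r' by apply: ord_inj.
    by move: nP; rewrite {1}e' sr' eqxx.
  rewrite leqNgt; apply/negP => lt.
  have := hs r' ltac:(lia).
  by rewrite sr' => /rev_ord_inj e; move: lt; rewrite e ltnn.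
pose s' := (tperm P r' * s)%g.
have Pne : P != r' by rewrite neq_ltn Pr'.
have s'P : s' P = rev_ord P by rewrite permM tpermL.
have s'r' : s' r' = sP by rewrite permM tpermR.
have s'x x : x != P -> x != r' -> s' x = s x.
  by move=> h1 h2; rewrite permM tpermD // eq_sym.
have ag : forall x : 'I_k, (x < k - d)%N -> s' x = rev_ord x.
  move=> x xlt.
  have [xp|xp] := ltnP x p.
    have xP : x != P by apply/negP => /eqP e; move: xp; rewrite e PE ltnn.
    have xr : x != r' by apply/negP => /eqP e; move: Pr'; rewrite -e => h; lia.
    by rewrite s'x // hs //; lia.
  have -> : x = P by apply: ord_inj; lia.
  exact: s'P.
have [IH1 _] := IH s' ag.
have [d1 p1] := @W_dom P sP P (rev_ord P)
  ltac:(rewrite /= in sPle *; lia) (leqnn _) ltac:(rewrite /= in sPle *; lia)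
  ltac:(apply/orP; right; apply/negP => /eqP e; move: nP; rewrite -sPdef e eqxx //).
have [d2 _] := @W_dom P sP r' sP
  ltac:(rewrite /= in sPle *; lia) (ltnW Pr') (leqnn _)
  ltac:(by rewrite Pne).
have lt : (wt s' < wt s)%N.
  rewrite /wt (bigD1 P) //= [X in (_ < X)%N](bigD1 P) //=.
  have r'P : r' != P by rewrite eq_sym.
  rewrite [X in (_ + X < _)%N](bigD1 r' r'P) [X in (_ < _ + X)%N](bigD1 r' r'P) /=.
  rewrite s'P s'r' sr'.
  rewrite (eq_bigr (fun i => W i (s i))); last first.
    by move=> i /andP[h1 h2]; rewrite s'x.
  rewrite -sPdef; lia.
split; first lia.
move=> _; lia.
Qed.

Lemma comb (s : 'S_k) : (wt revp <= wt s)%N /\ (s != revp -> (wt revp < wt s)%N).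
Proof. by apply: (@comb_aux k) => x; rewrite subnn. Qed.

End Comb2.

Section Main.
Variables (n : nat) (J : {set 'I_n}).
Local Notation k := #|J|.
Lemma rowJE (r : 'I_k) : nat_of_ord (rowJ J r) = r.
Proof. by []. Qed.
Definition cJ (s : 'I_k) : nat := nat_of_ord (colJ J s).
Lemma cJmono : forall a b : 'I_k, (a < b)%N -> (cJ a < cJ b)%N.
Proof. exact: colJ_mono. Qed.
Lemma cJbound : forall s : 'I_k, (cJ s + (k - s) <= n)%N.
Proof. exact: colJ_bound. Qed.
Lemma omegaW r s : omega (rowJ J r) (colJ J s) = W n #|J| cJ r s.
Proof. by []. Qed.
Local Notation wtJ := (wt n #|J| cJ).
Lemma omegaJ_eq : omegaJ J = wtJ (revp k).
Proof. by rewrite /omegaJ /wt; apply: eq_bigr => r _; rewrite revpE omegaW. Qed.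
Lemma combJ (s : 'S_k) : (wtJ (revp k) <= wtJ s)%N /\ (s != revp k -> (wtJ (revp k) < wtJ s)%N).
Proof. exact: (@comb n #|J| cJ cJmono cJbound s). Qed.

Definition cf (s : 'S_k) : zring n :=
  (-1) ^+ s * \prod_r genZ n (rowJ J r) (colJ J (s r)).
Definition qJ : {poly zring n} :=
  \sum_(s : 'S_k) (cf s)%:P * 'X^(wtJ s - omegaJ J).

Lemma det_tilde : DeltaJ J (tildeZ n) = \sum_(s : 'S_k) (cf s)%:P * 'X^(wtJ s).
Proof.
rewrite /DeltaJ /determinant; apply: eq_bigr => s _.
rewrite (eq_bigr (fun i => 'X^(W n #|J| cJ i (s i)) * (genZ n (rowJ J i) (colJ J (s i)))%:P)); last first.
  by move=> i _; rewrite !mxE omegaW.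
rewrite big_split /= prodrXr -rmorph_prod /cf polyCM rmorph_sign.
rewrite /wt -mulrA; congr (_ * _); exact: mulrC.
Qed.

Lemma q_factor : DeltaJ J (tildeZ n) = 'X^(omegaJ J) * qJ.
Proof.
rewrite det_tilde /qJ mulr_sumr; apply: eq_bigr => s _.
rewrite mulrCA -exprD subnKC //.
by rewrite omegaJ_eq; case: (combJ s).
Qed.

Lemma q_at0 : qJ.[0] = cf (revp k).
Proof.
rewrite /qJ horner_sum (bigD1 (revp k)) //= big1 ?addr0.
  by rewrite hornerCM hornerXn omegaJ_eq subnn expr0 mulr1.
move=> s hs; rewrite hornerCM hornerXn expr0n.
have [_ /(_ hs)] := combJ s; rewrite -omegaJ_eq => h.
by rewrite (_ : (wtJ s - omegaJ J == 0)%N = false) ?mulr0 //; apply/negbTE; rewrite subn_eq0 -ltnNge.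
Qed.

Lemma q_at1 : qJ.[1] = DeltaJ J (genZ n).
Proof.
rewrite /qJ horner_sum /DeltaJ /determinant; apply: eq_bigr => s _.
rewrite hornerCM.
rewrite hornerXn expr1n mulr1 /cf; congr (_ * _).
by apply: eq_bigr => i _; rewrite [RHS]mxE.
Qed.

Definition EZ (Z : 'M[CC]_n) (tau : CC) : CC :=
  \sum_(s : 'S_k) ((-1) ^+ s * \prod_r Z (rowJ J r) (colJ J (s r))) * tau ^+ (wtJ s - omegaJ J).

Lemma evalZt_q Z tau : evalZt qJ Z tau = EZ Z tau.
Proof.
rewrite /evalZt /qJ.
set v := fun k0 => mxvec Z 0 k0.
rewrite (_ : (fun p : zring n => p.@[v]) = meval v) //.
rewrite rmorph_sum horner_sum; apply: eq_bigr => s _.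
rewrite rmorphM /= map_polyC map_polyXn hornerCM hornerXn; congr (_ * _).
change (meval v (cf s) = (-1) ^+ s * \prod_(r < #|J|) Z (rowJ J r) (colJ J (s r))).
rewrite /cf mevalM rmorph_sign rmorph_prod; congr (_ * _); apply: eq_bigr => i _.
rewrite /genZ mxE.
change (meval v 'X_(mxvec_index (rowJ J i) (colJ J (s i))) = Z (rowJ J i) (colJ J (s i))).
by rewrite mevalXU /v mxvecE.
Qed.

Definition Tm (tau : CC) (Z : 'M[CC]_n) : 'M[CC]_n :=
  \matrix_(i, j) (tau ^+ omega i j * Z i j).
Definition subJ (M : 'M[CC]_n) : 'M[CC]_k :=
  \matrix_(r, s) M (rowJ J r) (colJ J s).

Lemma EZ_det Z tau : tau ^+ (omegaJ J) * EZ Z tau = \det (subJ (Tm tau Z)).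
Proof.
rewrite /EZ mulr_sumr /determinant; apply: eq_bigr => s _.
have -> : \prod_i subJ (Tm tau Z) i (s i) =
    \prod_i (tau ^+ (W n k cJ i (s i)) * Z (rowJ J i) (colJ J (s i))).
  by apply: eq_bigr => i _; rewrite /subJ /Tm !mxE omegaW.
rewrite big_split /= prodrXr.
have h := proj1 (combJ s); rewrite -omegaJ_eq in h.
rewrite (_ : (\sum_(i < k) W n k cJ i (s i))%N = wtJ s) //.
rewrite -[in RHS](subnKC h) exprD.
set a := tau ^+ _; set b := tau ^+ (_ - _); set P := \prod_(r < k) _; set c := (-1) ^+ _.
clearbody a b P c. ring.
Qed.

Lemma det_sub_mul u M : lower_unipotent u -> \det (subJ (u *m M)) = \det (subJ M).
Proof.
case=> hu1 hu2.
have -> : subJ (u *m M) = (\matrix_(r, a) u (rowJ J r) (rowJ J a)) *m subJ M.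
  apply/matrixP => r s; rewrite /subJ !mxE.
  rewrite (bigID (fun a : 'I_n => (a < k)%N)) /= [X in _ + X]big1 ?addr0; last first.
    move=> a; rewrite -leqNgt => ha; rewrite hu1 ?mul0r //.
    by rewrite rowJE; apply: leq_trans (ltn_ord r) ha.
  rewrite (big_ord_narrow (card_set_ord_le J)).
  by apply: eq_bigr => a _; rewrite !mxE.
rewrite det_mulmx det_trig ?mul1r.
  rewrite big1 ?mul1r // => i _; rewrite mxE; exact: hu2.
apply/is_trig_mxP => i j ij; rewrite mxE hu1 //.
Qed.

Lemma Tcolact u Z tau : tau != 0 -> Tm tau (colact (Psi tau u) Z) = u *m Tm tau Z.
Proof.
move=> t0; apply/matrixP => a j.
have Du : tauj tau j \in unitmx.
  rewrite unitmxE det_diag unitfE; apply/prodf_neq0 => i _; rewrite mxE expf_neq0 //.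
have e1 : Tm tau (colact (Psi tau u) Z) a j = (tauj tau j *m (Psi tau u j *m col j Z)) a 0.
  by rewrite /tauj mul_diag_mx !mxE.
rewrite e1 /Psi t0 -!mulmxA mulKVmx //.
by rewrite /tauj mul_diag_mx !mxE; apply: eq_bigr => c _; rewrite !mxE.
Qed.

Lemma E0 Z : EZ Z 0 = (-1) ^+ (revp k) * \prod_r Z (rowJ J r) (colJ J (revp k r)).
Proof.
rewrite /EZ (bigD1 (revp k)) //= [X in _ + X]big1 ?addr0.
  by rewrite omegaJ_eq subnn expr0 mulr1.
move=> s hs; rewrite expr0n.
have [_ /(_ hs)] := combJ s; rewrite -omegaJ_eq => h.
by rewrite (_ : (wtJ s - omegaJ J == 0)%N = false) ?mulr0 //; apply/negbTE; rewrite subn_eq0 -ltnNge.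
Qed.

Lemma anti_inv u Z r : lower_unipotent u ->
  colact (Psi 0 u) Z (rowJ J r) (colJ J (revp k r)) = Z (rowJ J r) (colJ J (revp k r)).
Proof.
case=> hu1 hu2.
rewrite /colact mxE /Psi eqxx /= !mxE.
rewrite (bigD1 (rowJ J r)) //= big1 ?addr0.
  by rewrite !mxE ltnn andbF hu2 mul1r.
move=> c hc; rewrite !mxE.
have [lt|gt|eq] := ltngtP c (rowJ J r).
- have hb := cJbound (revp k r); rewrite /cJ revpE /= in hb.
  rewrite rowJE in lt.
  have hcond : (c + colJ J (revp k r) + 2 <= n)%N.
    rewrite revpE; have := ltn_ord r; move: hb lt. set y := nat_of_ord (colJ J (rev_ord r)). set kk := #|J|. set rr := nat_of_ord r. lia.
  by rewrite hcond /= mul0r.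
- by rewrite andbF hu1 ?mul0r.
- by move: hc; rewrite (ord_inj eq) eqxx.
Qed.

End Main.

Theorem mainTheorem3 (n : nat) (J : {set 'I_n}) :
  J != set0 ->
  exists q : {poly zring n},
    DeltaJ J (tildeZ n) = 'X^(omegaJ J) * q /\
    (exists s : CC, (s = 1 \/ s = -1) /\
       q.[0] = s *: \prod_(r < #|J|) genZ n (rowJ J r) (colJ J (rev_ord r))) /\
    q.[1] = DeltaJ J (genZ n) /\
    (forall (u : 'M[CC]_n), lower_unipotent u ->
       forall (Z : 'M[CC]_n) (tau : CC),
         evalZt q (colact (Psi tau u) Z) tau = evalZt q Z tau).
Proof.
move=> _; exists (qJ n J); split; first exact: q_factor.
split.
  exists ((-1) ^+ odd_perm (revp #|J|)); split.
    by case: (odd_perm _); [right; rewrite expr1 | left; rewrite expr0].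
  rewrite q_at0 /cf (eq_bigr (fun r => genZ n (rowJ J r) (colJ J (rev_ord r)))); last first.
    by move=> r _; rewrite revpE.
  case: (odd_perm (revp #|J|)); rewrite ?expr1 ?expr0 ?mulN1r ?scaleN1r ?mul1r ?scale1r //.
split; first exact: q_at1.
move=> u hu Z tau; rewrite !evalZt_q.
have [->|t0] := eqVneq tau 0.
  rewrite !E0; congr (_ * _); apply: eq_bigr => r _; exact: anti_inv.
apply: (mulfI (expf_neq0 (omegaJ J) t0)).
by rewrite !EZ_det Tcolact // det_sub_mul.
Qed.
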